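(* Let $\lambda,\mu\in P^+$ (type $C_2$). Then $$|\mathcal S^{C}_{\lambda,\mu}|=|\mathcal S^{C}_{\lambda-\varpi_1,\mu-\varpi_1}|+|{}^{1}\mathcal S^{C}_{\lambda-\varpi_2,\mu-\varpi_2}|+|{}^{2}\mathcal S^{C}_{\lambda,\mu}|.$$ Moreover, if $\min\{m_2,n_2\}>0$ then $$|{}^{2}\mathcal S^{C}_{\lambda,\mu}|=|{}^{2}\mathcal S^{C}_{\lambda-\varpi_2,\mu-\varpi_2}|+\min\{2(m_1+m_2),2(n_1+n_2),m_1+n_1\}+1,$$ and if $\min\{m_2,n_2\}=0$ and $\min\{m_1,n_1\}>0$ then $$|{}^{2}\mathcal S^{C}_{\lambda,\mu}|=|{}^{2}\mathcal S^{C}_{\lambda-\varpi_1,\mu-\varpi_1}|+\min\{n_1,m_2\}+\min\{m_1,n_2\}+1.$$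
   Context: For integral weights $\lambda,\mu$ of type $C_2$ (fundamental weights $\varpi_1,\varpi_2$, $\alpha_1$ short) write $m_i=\lambda(h_i)$, $n_i=\mu(h_i)$ (arbitrary integers; sets are defined by the same inequalities for all integer values). $\mathcal S^{C}_{\lambda,\mu}=\{(a,b,c,d)\in\mathbb Z_+^4: a\le\min\{m_1,n_1\},\ d\le\min\{m_2,n_2\},\ a+b+c\le\min\{m_1+m_2,n_1+n_2\},\ a+b+d\le\min\{m_1+m_2,n_1+n_2\},\ 2a+b\le m_1+n_1,\ 2d+b\le m_2+n_2,\ 2a+b+2(c-d)\le m_1+n_1\}$. ${}^{1}\mathcal S^{C}_{\lambda,\mu}=\{(b,c,d)\in\mathbb Z_+^3: d\le\min\{m_2,n_2\},\ b+d\le\min\{m_1+m_2,n_1+n_2\},\ b+c\le\min\{m_1+m_2,n_1+n_2\},\ b\le m_1+n_1,\ 2d+b\le m_2+n_2,\ b+2c-2d\le m_1+n_1\}$. ${}^{2}\mathcal S^{C}_{\lambda,\mu}\subseteq\mathbb Z_+^3$ is the union of $\{(b,0,d): d\le\min\{m_2,n_2\},\ b+d\le\min\{m_1+m_2,n_1+n_2\},\ b\le m_1+n_1,\ 2d+b\le m_2+n_2\}$ and $\{(b,c,0): c\ge1,\ b+c\le\min\{m_1+m_2,n_1+n_2\},\ b\le m_2+n_2,\ b+2c\le m_1+n_1\}$. *)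

(* Defs.v *)
(* Weights are given by integer coordinates m_i = lambda(h_i),
   n_i = mu(h_i); the sets live in Z_+^k, encoded with nat coordinates. *)
From mathcomp Require Import all_boot all_order all_algebra.
Set Implicit Arguments. Unset Strict Implicit. Unset Printing Implicit Defensive.
Import Order.TTheory GRing.Theory Num.Theory.
Local Open Scope ring_scope.

Definition inSC (m1 m2 n1 n2 : int) (a b c d : nat) : bool :=
  [&& (a%:Z <= Order.min m1 n1),
      (d%:Z <= Order.min m2 n2),
      (a%:Z + b%:Z + c%:Z <= Order.min (m1 + m2) (n1 + n2)),
      (a%:Z + b%:Z + d%:Z <= Order.min (m1 + m2) (n1 + n2)),
      (2 * a%:Z + b%:Z <= m1 + n1),
      (2 * d%:Z + b%:Z <= m2 + n2) &
      (2 * a%:Z + b%:Z + 2 * (c%:Z - d%:Z) <= m1 + n1)].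

Definition inS1C (m1 m2 n1 n2 : int) (b c d : nat) : bool :=
  [&& (d%:Z <= Order.min m2 n2),
      (b%:Z + d%:Z <= Order.min (m1 + m2) (n1 + n2)),
      (b%:Z + c%:Z <= Order.min (m1 + m2) (n1 + n2)),
      (b%:Z <= m1 + n1),
      (2 * d%:Z + b%:Z <= m2 + n2) &
      (b%:Z + 2 * c%:Z - 2 * d%:Z <= m1 + n1)].

Definition inS2C (m1 m2 n1 n2 : int) (b c d : nat) : bool :=
  ([&& c == 0%N,
      (d%:Z <= Order.min m2 n2),
      (b%:Z + d%:Z <= Order.min (m1 + m2) (n1 + n2)),
      (b%:Z <= m1 + n1) &
      (2 * d%:Z + b%:Z <= m2 + n2)])
  ||
  ([&& d == 0%N, (0 < c)%N,
      (b%:Z + c%:Z <= Order.min (m1 + m2) (n1 + n2)),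
      (b%:Z <= m2 + n2) &
      (b%:Z + 2 * c%:Z <= m1 + n1)]).

(* A box bound: every coordinate of every element of each of the three sets
   is at most |m1|+|m2|+|n1|+|n2|, so counting inside [0, bnd) counts the
   whole (finite) set. *)
Definition bnd (m1 m2 n1 n2 : int) : nat :=
  (`|m1| + `|m2| + `|n1| + `|n2|).+1%N.

Definition cardSC (m1 m2 n1 n2 : int) : nat :=
  let N := bnd m1 m2 n1 n2 in
  #|[set x : 'I_N * 'I_N * 'I_N * 'I_N |
      inSC m1 m2 n1 n2 x.1.1.1 x.1.1.2 x.1.2 x.2]|.

Definition cardS1C (m1 m2 n1 n2 : int) : nat :=
  let N := bnd m1 m2 n1 n2 in
  #|[set x : 'I_N * 'I_N * 'I_N | inS1C m1 m2 n1 n2 x.1.1 x.1.2 x.2]|.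

Definition cardS2C (m1 m2 n1 n2 : int) : nat :=
  let N := bnd m1 m2 n1 n2 in
  #|[set x : 'I_N * 'I_N * 'I_N | inS2C m1 m2 n1 n2 x.1.1 x.1.2 x.2]|.

(* Main.v *)
Require Import Defs.
From mathcomp Require Import all_boot all_order all_algebra zify.
Import Order.TTheory GRing.Theory Num.Theory.
Open Scope nat_scope.

Lemma card3E K (P : nat -> nat -> nat -> bool) :
  #|[set x : 'I_K * 'I_K * 'I_K | P x.1.1 x.1.2 x.2]| =
  \sum_(0 <= a < K) \sum_(0 <= b < K) \sum_(0 <= c < K) P a b c.
Proof.
symmetry.
rewrite big_mkord.
under eq_bigr => a _ do rewrite big_mkord.
under eq_bigr => a _ do under eq_bigr => b _ do rewrite big_mkord.
rewrite pair_bigA /= pair_bigA /= -sum1_card [RHS]big_mkcond /=.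
apply: eq_bigr => x _; rewrite in_set /=; by case: (P _ _ _).
Qed.

Lemma card4E K (P : nat -> nat -> nat -> nat -> bool) :
  #|[set x : 'I_K * 'I_K * 'I_K * 'I_K | P x.1.1.1 x.1.1.2 x.1.2 x.2]| =
  \sum_(0 <= a < K) \sum_(0 <= b < K) \sum_(0 <= c < K) \sum_(0 <= d < K) P a b c d.
Proof.
symmetry.
rewrite big_mkord.
under eq_bigr => a _ do rewrite big_mkord.
under eq_bigr => a _ do under eq_bigr => b _ do rewrite big_mkord.
under eq_bigr => a _ do under eq_bigr => b _ do under eq_bigr => c _ do rewrite big_mkord.
rewrite pair_bigA /= pair_bigA /= pair_bigA /= -sum1_card [RHS]big_mkcond /=.
apply: eq_bigr => x _; rewrite in_set /=; by case: (P _ _ _ _).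
Qed.

Lemma sum_ext1 K N (F : nat -> nat) : K <= N -> (forall i, K <= i -> F i = 0) ->
  \sum_(0 <= i < N) F i = \sum_(0 <= i < K) F i.
Proof.
move=> KN H; rewrite (@big_cat_nat _ _ _ K) //=.
rewrite [X in _ + X]big_nat_cond [X in _ + X]big1 ?addn0 // => i /andP[/andP[Ki _] _]; exact: H.
Qed.

Arguments sum_ext1 {K N F}.

Lemma sum_shift N (F : nat -> nat) : 0 < N -> F N = 0 ->
  \sum_(0 <= i < N) F i = F 0 + \sum_(0 <= i < N) F i.+1.
Proof.
case: N => // n _ H; rewrite big_nat_recl // [in RHS]big_nat_recr //= H addn0 //.
Qed.

Definition S3 N (P : nat -> nat -> nat -> nat) :=
  \sum_(0 <= a < N) \sum_(0 <= b < N) \sum_(0 <= c < N) P a b c.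
Definition S4 N (P : nat -> nat -> nat -> nat -> nat) :=
  \sum_(0 <= a < N) \sum_(0 <= b < N) \sum_(0 <= c < N) \sum_(0 <= d < N) P a b c d.

Ltac zt := rewrite /inSC /inS1C /inS2C /bnd; repeat (apply: big1 => ? _); lia.

Lemma ext3 K N (P : nat -> nat -> nat -> bool) : K <= N ->
  (forall a b c, P a b c -> [&& a < K, b < K & c < K]) ->
  S3 N P = S3 K P.
Proof.
move=> KN H; rewrite /S3 (sum_ext1 KN); last first.
  move=> i Ki; apply: big1 => b _; apply: big1 => c _.
  by case E: (P i b c) => //; move: (H _ _ _ E); lia.
apply: eq_bigr => a _; rewrite (sum_ext1 KN); last first.
  move=> i Ki; apply: big1 => c _.
  by case E: (P a i c) => //; move: (H _ _ _ E); lia.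
apply: eq_bigr => b _; rewrite (sum_ext1 KN) // => i Ki.
by case E: (P a b i) => //; move: (H _ _ _ E); lia.
Qed.

Lemma ext4 K N (P : nat -> nat -> nat -> nat -> bool) : K <= N ->
  (forall a b c d, P a b c d -> [&& a < K, b < K, c < K & d < K]) ->
  S4 N P = S4 K P.
Proof.
move=> KN H; rewrite /S4 (sum_ext1 KN); last first.
  move=> i Ki; apply: big1 => b _; apply: big1 => c _; apply: big1 => d _.
  by case E: (P i b c d) => //; move: (H _ _ _ _ E); lia.
apply: eq_bigr => a _; rewrite (sum_ext1 KN); last first.
  move=> i Ki; apply: big1 => c _; apply: big1 => d _.
  by case E: (P a i c d) => //; move: (H _ _ _ _ E); lia.
apply: eq_bigr => b _; rewrite (sum_ext1 KN); last first.
  move=> i Ki; apply: big1 => d _.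
  by case E: (P a b i d) => //; move: (H _ _ _ _ E); lia.
apply: eq_bigr => c _; rewrite (sum_ext1 KN) // => i Ki.
by case E: (P a b c i) => //; move: (H _ _ _ _ E); lia.
Qed.

Lemma cardSCE (m1 m2 n1 n2 : int) N : bnd m1 m2 n1 n2 <= N ->
  cardSC m1 m2 n1 n2 = S4 N (fun a b c d => inSC m1 m2 n1 n2 a b c d).
Proof.
move=> HN; rewrite /cardSC card4E (@ext4 _ _ (fun a b c d => inSC m1 m2 n1 n2 a b c d) HN) //.
move=> a b c d; rewrite /inSC /bnd; lia.
Qed.

Lemma cardS1CE (m1 m2 n1 n2 : int) N : bnd m1 m2 n1 n2 <= N ->
  cardS1C m1 m2 n1 n2 = S3 N (fun a b c => inS1C m1 m2 n1 n2 a b c).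
Proof.
move=> HN; rewrite /cardS1C card3E (@ext3 _ _ (fun a b c => inS1C m1 m2 n1 n2 a b c) HN) //.
move=> a b c; rewrite /inS1C /bnd; lia.
Qed.

Lemma cardS2CE (m1 m2 n1 n2 : int) N : bnd m1 m2 n1 n2 <= N ->
  cardS2C m1 m2 n1 n2 = S3 N (fun a b c => inS2C m1 m2 n1 n2 a b c).
Proof.
move=> HN; rewrite /cardS2C card3E (@ext3 _ _ (fun a b c => inS2C m1 m2 n1 n2 a b c) HN) //.
move=> a b c; rewrite /inS2C /bnd; lia.
Qed.

Lemma shSC (m1 m2 n1 n2 : int) a b c d :
  inSC m1 m2 n1 n2 a.+1 b c d = inSC (m1 - 1)%R m2 (n1 - 1)%R n2 a b c d.
Proof. rewrite /inSC; lia. Qed.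

Lemma decSC (m1 m2 n1 n2 : nat) b c d :
  (inSC m1 m2 n1 n2 0 b c d : nat) =
  ((0 < c) && (0 < d) && inS1C m1 (m2%:Z - 1)%R n1 (n2%:Z - 1)%R b c.-1 d.-1 : nat)
  + inS2C m1 m2 n1 n2 b c d.
Proof. rewrite /inSC /inS1C /inS2C; case: c => [|c]; case: d => [|d] /=; lia. Qed.

Lemma part1 (m1 m2 n1 n2 : nat) :
  cardSC m1 m2 n1 n2 =
    (cardSC (m1%:Z - 1)%R m2 (n1%:Z - 1)%R n2
     + cardS1C m1 (m2%:Z - 1)%R n1 (n2%:Z - 1)%R
     + cardS2C m1 m2 n1 n2)%N.
Proof.
set L := (m1 + m2 + n1 + n2 + 5)%N.
have L0 : 0 < L by rewrite /L; lia.
rewrite (@cardSCE _ _ _ _ L); last by rewrite /bnd /L; lia.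
rewrite (@cardSCE _ _ _ _ L); last by rewrite /bnd /L; lia.
rewrite (@cardS1CE _ _ _ _ L); last by rewrite /bnd /L; lia.
rewrite (@cardS2CE _ _ _ _ L); last by rewrite /bnd /L; lia.
rewrite /S4 sum_shift //; last by zt.
have h1 : \sum_(0 <= i < L) \sum_(0 <= b < L) \sum_(0 <= c < L) \sum_(0 <= d < L)
      (inSC m1 m2 n1 n2 i.+1 b c d : nat) =
    S4 L (fun a b c d => inSC (m1%:Z - 1)%R m2 (n1%:Z - 1)%R n2 a b c d).
  apply: eq_bigr => a _; apply: eq_bigr => b _; apply: eq_bigr => c _;
  apply: eq_bigr => d _; by rewrite shSC.
rewrite h1 addnC -addnA; congr (_ + _).
under eq_bigr => b _ do under eq_bigr => c _ do under eq_bigr => d _ do rewrite decSC.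
under eq_bigr => b _ do under eq_bigr => c _ do rewrite big_split /=.
under eq_bigr => b _ do rewrite big_split /=.
rewrite big_split /=; congr (_ + _).
apply: eq_bigr => b _; rewrite sum_shift //; last by zt.
rewrite big1 ?add0n //; apply: eq_bigr => c _.
rewrite sum_shift //; last by zt.
Qed.

Lemma cnt_le N y : \sum_(0 <= b < N) (b <= y : nat) = minn N y.+1.
Proof. elim: N => [|N IH]; first by rewrite big_nil; lia.
rewrite big_nat_recr //= IH; case: leqP => H; lia. Qed.

Lemma cnt_pair N x :
  \sum_(0 <= c < N) ((2 * c <= x : nat) + (2 * c + 1 <= x : nat)) = minn (2 * N) x.+1.
Proof. elim: N => [|N IH]; first by rewrite big_nil; lia.
rewrite big_nat_recr //= IH; case: (leqP (2 * N) x) => H; case: (leqP (2*N+1) x) => H'; lia. Qed.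

Lemma sum_only0 N (F : nat -> nat) : 0 < N -> (forall c, 0 < c -> F c = 0) ->
  \sum_(0 <= c < N) F c = F 0.
Proof.
move=> N0 H; rewrite sum_shift //; last by apply: H.
by rewrite big1 ?addn0 // => i _; apply: H.
Qed.

Definition uU (m1 m2 n1 n2 b c : nat) : bool :=
  [&& b <= m2 + n2, b + c <= minn (m1 + m2) (n1 + n2) & b + 2 * c <= m1 + n1].

Lemma p3a (m1 m2 n1 n2 : nat) b c d : minn m2 n2 = 0 ->
  inS2C m1 m2 n1 n2 b c d = (d == 0) && uU m1 m2 n1 n2 b c.
Proof. rewrite /inS2C /uU; lia. Qed.

Lemma p3b (m1 m2 n1 n2 : nat) b c d : minn m2 n2 = 0 -> 0 < minn m1 n1 ->
  inS2C (m1%:Z - 1)%R m2 (n1%:Z - 1)%R n2 b c d = (d == 0) && uU m1 m2 n1 n2 b c.+1.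
Proof. rewrite /inS2C /uU; lia. Qed.

Lemma part3 (m1 m2 n1 n2 : nat) : minn m2 n2 = 0 -> 0 < minn m1 n1 ->
      cardS2C m1 m2 n1 n2 =
        (cardS2C (m1%:Z - 1)%R m2 (n1%:Z - 1)%R n2
         + minn n1 m2 + minn m1 n2 + 1)%N.
Proof.
move=> H2 H1.
set L := (m1 + m2 + n1 + n2 + 5)%N.
have L0 : 0 < L by rewrite /L; lia.
rewrite (@cardS2CE _ _ _ _ L); last by rewrite /bnd /L; lia.
rewrite (@cardS2CE _ _ _ _ L); last by rewrite /bnd /L; lia.
have e1 : S3 L (fun a b c => inS2C m1 m2 n1 n2 a b c) =
   \sum_(0 <= b < L) \sum_(0 <= c < L) (uU m1 m2 n1 n2 b c : nat).
  apply: eq_bigr => b _; apply: eq_bigr => c _.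
  under eq_bigr => d _ do rewrite p3a //.
  by rewrite sum_only0 // => -[].
have e2 : S3 L (fun a b c => inS2C (m1%:Z - 1)%R m2 (n1%:Z - 1)%R n2 a b c) =
   \sum_(0 <= b < L) \sum_(0 <= c < L) (uU m1 m2 n1 n2 b c.+1 : nat).
  apply: eq_bigr => b _; apply: eq_bigr => c _.
  under eq_bigr => d _ do rewrite p3b //.
  by rewrite sum_only0 // => -[].
have e3 : \sum_(0 <= b < L) \sum_(0 <= c < L) (uU m1 m2 n1 n2 b c : nat) =
   \sum_(0 <= b < L) (uU m1 m2 n1 n2 b 0 : nat) +
   \sum_(0 <= b < L) \sum_(0 <= c < L) (uU m1 m2 n1 n2 b c.+1 : nat).
  rewrite -big_split /=; apply: eq_bigr => b _.
  rewrite sum_shift //; rewrite /uU; lia.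
have e4 : \sum_(0 <= b < L) (uU m1 m2 n1 n2 b 0 : nat) =
   \sum_(0 <= b < L) (b <= minn (m2 + n2) (minn (minn (m1 + m2) (n1 + n2)) (m1 + n1)) : nat).
  apply: eq_bigr => b _; rewrite /uU; lia.
rewrite e1 e2 e3 e4 cnt_le; rewrite /L; lia.
Qed.

Lemma p2a (m1 m2 n1 n2 : nat) b c d : 0 < m2 -> 0 < n2 ->
  (inS2C m1 m2 n1 n2 b c d : nat) =
  ((c == 0) && (0 < d) && inS2C m1 (m2%:Z - 1)%R n1 (n2%:Z - 1)%R b 0 d.-1 : nat)
  + ((d == 0) && uU m1 m2 n1 n2 b c : nat).
Proof. rewrite /inS2C /uU; case: d => [|d] /=; lia. Qed.

Lemma p2b (m1 m2 n1 n2 : int) b c d :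
  (inS2C m1 m2 n1 n2 b c d : nat) =
  ((c == 0) && inS2C m1 m2 n1 n2 b 0 d : nat)
  + ((0 < c) && (d == 0) && inS2C m1 m2 n1 n2 b c 0 : nat).
Proof. rewrite /inS2C; case: c => [|c]; case: d => [|d] /=; lia. Qed.

Lemma p2c (m1 m2 n1 n2 : nat) b c : 0 < m2 -> 0 < n2 ->
  inS2C m1 (m2%:Z - 1)%R n1 (n2%:Z - 1)%R b c.+1 0 = uU m1 m2 n1 n2 b.+2 c.
Proof. rewrite /inS2C /uU; lia. Qed.

Lemma p2d (m1 m2 n1 n2 : nat) c : 0 < m2 -> 0 < n2 ->
  (uU m1 m2 n1 n2 0 c : nat) + (uU m1 m2 n1 n2 1 c : nat) =
  (2 * c <= minn (2 * minn (m1 + m2) (n1 + n2)) (m1 + n1) : nat)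
  + (2 * c + 1 <= minn (2 * minn (m1 + m2) (n1 + n2)) (m1 + n1) : nat).
Proof. rewrite /uU; lia. Qed.

Lemma part2 (m1 m2 n1 n2 : nat) : 0 < minn m2 n2 ->
      cardS2C m1 m2 n1 n2 =
        (cardS2C m1 (m2%:Z - 1)%R n1 (n2%:Z - 1)%R
         + minn (minn (2 * (m1 + m2)) (2 * (n1 + n2))) (m1 + n1) + 1)%N.
Proof.
move=> Hp.
have hm2 : 0 < m2 by lia.
have hn2 : 0 < n2 by lia.
set L := (m1 + m2 + n1 + n2 + 5)%N.
have L0 : 0 < L by rewrite /L; lia.
rewrite (@cardS2CE _ _ _ _ L); last by rewrite /bnd /L; lia.
rewrite (@cardS2CE _ _ _ _ L); last by rewrite /bnd /L; lia.
set Q := fun b d => (inS2C m1 (m2%:Z - 1)%R n1 (n2%:Z - 1)%R b 0 d : nat).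
set G := fun b => \sum_(0 <= c < L) (uU m1 m2 n1 n2 b c : nat).
have e1 : S3 L (fun a b c => inS2C m1 m2 n1 n2 a b c) =
   \sum_(0 <= b < L) \sum_(0 <= d < L) Q b d + \sum_(0 <= b < L) G b.
  rewrite /S3 -big_split /=; apply: eq_bigr => b _.
  under eq_bigr => c _ do under eq_bigr => d _ do rewrite p2a //.
  under eq_bigr => c _ do rewrite big_split /=.
  rewrite big_split /=; congr (_ + _).
    rewrite sum_only0 //; last by move=> [|c] // _; apply: big1.
    rewrite sum_shift //=; last by rewrite /inS2C; lia.
  rewrite /G; apply: eq_bigr => c _; rewrite sum_only0 //; last by move=> -[].
have e2 : S3 L (fun a b c => inS2C m1 (m2%:Z - 1)%R n1 (n2%:Z - 1)%R a b c) =
   \sum_(0 <= b < L) \sum_(0 <= d < L) Q b d + \sum_(0 <= b < L) G b.+2.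
  rewrite /S3 -big_split /=; apply: eq_bigr => b _.
  under eq_bigr => c _ do under eq_bigr => d _ do rewrite p2b.
  under eq_bigr => c _ do rewrite big_split /=.
  rewrite big_split /=; congr (_ + _).
    by rewrite sum_only0 //; move=> [|c] // _; apply: big1.
  rewrite sum_shift //; last first.
    apply: big1 => d _; rewrite /inS2C; lia.
  rewrite big1 ?add0n; last by move=> d _.
  rewrite /G; apply: eq_bigr => c _; rewrite sum_only0 //; last by move=> -[] //= ? _; rewrite andbF.
  by rewrite /= p2c.
have e3 : \sum_(0 <= b < L) G b = G 0 + G 1 + \sum_(0 <= b < L) G b.+2.
  rewrite sum_shift //; last by rewrite /G; apply: big1 => c _; rewrite /uU /L; lia.
  rewrite sum_shift //; last by rewrite /G; apply: big1 => c _; rewrite /uU /L; lia.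
  by rewrite addnA.
have e4 : G 0 + G 1 = (minn (2 * minn (m1 + m2) (n1 + n2)) (m1 + n1)).+1.
  rewrite /G -big_split /=.
  under eq_bigr => c _ do rewrite p2d //.
  rewrite cnt_pair /L; lia.
rewrite e1 e2 e3 e4; lia.
Qed.

Local Open Scope ring_scope.

Theorem lemma5p3 (m1 m2 n1 n2 : nat) :
  cardSC m1 m2 n1 n2 =
    (cardSC (m1%:Z - 1) m2 (n1%:Z - 1) n2
     + cardS1C m1 (m2%:Z - 1) n1 (n2%:Z - 1)
     + cardS2C m1 m2 n1 n2)%N
  /\ ((0 < minn m2 n2)%N ->
      cardS2C m1 m2 n1 n2 =
        (cardS2C m1 (m2%:Z - 1) n1 (n2%:Z - 1)
         + minn (minn (2 * (m1 + m2)) (2 * (n1 + n2))) (m1 + n1) + 1)%N)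
  /\ (minn m2 n2 = 0%N -> (0 < minn m1 n1)%N ->
      cardS2C m1 m2 n1 n2 =
        (cardS2C (m1%:Z - 1) m2 (n1%:Z - 1) n2
         + minn n1 m2 + minn m1 n2 + 1)%N).
Proof.
split; first exact: part1.
split; first exact: part2.
exact: part3.
Qed.
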